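(* Every closed semi-smooth subset of $\mathbb{C}$ is a $2$-dimensional topological manifold with boundary.
   Context: Let $B\subset\mathbb{C}$ be closed. For $z\in\partial B$, a vector $\mathbf v\in T_z\mathbb{C}\cong\mathbb{C}$ is normal to $B$ if $\mathbf v\neq 0$ and for every $\theta\in(0,\pi/2)$ there is $\delta>0$ such that the open sector $\{z+te^{i\phi}\mathbf v/|\mathbf v| : \phi\in(-\theta,\theta),\ t\in(0,\delta)\}$ is disjoint from $B$. The closed set $B$ is semi-smooth if (i) for every $z\in\partial B$ the set of vectors normal to $B$ at $z$ is non-empty and convex, and (ii) any non-zero limit of normal vectors is normal: if $z_n\in\partial B$, $\mathbf v_n$ is normal to $B$ at $z_n$, $z_n\to z$ and $\mathbf v_n\to\mathbf v\neq 0$, then $\mathbf v$ is normal to $B$ at $z$. *)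

(* Defs.v *)
From Stdlib Require Import Reals.
From Coquelicot Require Import Coquelicot.
Open Scope R_scope.

Definition is_open (U : C -> Prop) : Prop :=
  forall z, U z -> exists e, 0 < e /\ forall w, Cmod (w - z)%C < e -> U w.

Definition is_closed (B : C -> Prop) : Prop :=
  forall z, (forall e, 0 < e -> exists w, B w /\ Cmod (w - z)%C < e) -> B z.

Definition interior (B : C -> Prop) (z : C) : Prop :=
  exists e, 0 < e /\ forall w, Cmod (w - z)%C < e -> B w.

Definition closure (B : C -> Prop) (z : C) : Prop :=
  forall e, 0 < e -> exists w, B w /\ Cmod (w - z)%C < e.

Definition boundary (B : C -> Prop) (z : C) : Prop :=
  closure B z /\ ~ interior B z.

Definition seq_conv (u : nat -> C) (l : C) : Prop :=
  forall e, 0 < e -> exists N, forall n, (N <= n)%nat -> Cmod (u n - l)%C < e.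

Definition expi (phi : R) : C := (cos phi, sin phi).

Definition is_normal (B : C -> Prop) (z v : C) : Prop :=
  v <> 0%C /\
  forall theta, 0 < theta < PI / 2 ->
    exists delta, 0 < delta /\
      forall phi t, - theta < phi < theta -> 0 < t < delta ->
        ~ B (z + RtoC t * expi phi * (v / RtoC (Cmod v)))%C.

Definition semi_smooth (B : C -> Prop) : Prop :=
  is_closed B /\
  (forall z, boundary B z ->
     (exists v, is_normal B z v) /\
     (forall v w (l : R), is_normal B z v -> is_normal B z w -> 0 <= l <= 1 ->
        is_normal B z (RtoC l * v + RtoC (1 - l) * w)%C)) /\
  (forall (zs vs : nat -> C) (z v : C),
     (forall n, boundary B (zs n)) ->
     (forall n, is_normal B (zs n) (vs n)) ->
     seq_conv zs z -> seq_conv vs v -> v <> 0%C ->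
     is_normal B z v).

Definition half_plane (p : C) : Prop := 0 <= snd p.

Definition continuous_on (A : C -> Prop) (f : C -> C) : Prop :=
  forall x, A x -> forall e, 0 < e -> exists d, 0 < d /\
    forall y, A y -> Cmod (y - x)%C < d -> Cmod (f y - f x)%C < e.

Definition homeomorphic_via (A V : C -> Prop) (f g : C -> C) : Prop :=
  (forall x, A x -> V (f x)) /\ (forall y, V y -> A (g y)) /\
  (forall x, A x -> g (f x) = x) /\ (forall y, V y -> f (g y) = y) /\
  continuous_on A f /\ continuous_on V g.

(* M (a subspace of C, hence Hausdorff and second countable) is a topological
   2-manifold with boundary: every point of M has an open neighbourhood in M
   homeomorphic to an open subset of the closed half-plane H. *)
Definition manifold_with_boundary_2 (M : C -> Prop) : Prop :=
  forall x, M x ->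
    exists (U W : C -> Prop) (f g : C -> C),
      is_open U /\ U x /\ is_open W /\
      homeomorphic_via (fun y => U y /\ M y) (fun p => W p /\ half_plane p) f g.

(* Main.v *)
Require Import Defs.
From Stdlib Require Import Reals Lra Lia Psatz ZArith ClassicalEpsilon Classical.
From Coquelicot Require Import Coquelicot.
Open Scope R_scope.

Lemma C_ext (x y : C) : fst x = fst y -> snd x = snd y -> x = y.
Proof. destruct x, y; simpl; intros; subst; reflexivity. Qed.

Definition dot (a b : C) := fst a * fst b + snd a * snd b.
Definition nn (a : C) := fst a * fst a + snd a * snd a.

Lemma nn_ge0 a : 0 <= nn a.
Proof. unfold nn; nra. Qed.

Lemma Cmod_nn a : Cmod a = sqrt (nn a).
Proof. unfold Cmod, nn; f_equal; ring. Qed.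

Lemma Cmod_sq a : Cmod a * Cmod a = nn a.
Proof. rewrite Cmod_nn. apply sqrt_sqrt, nn_ge0. Qed.

Lemma abs_fst_le a : Rabs (fst a) <= Cmod a.
Proof. pose proof (Rmax_Cmod a). pose proof (Rmax_l (Rabs (fst a)) (Rabs (snd a))). lra. Qed.
Lemma abs_snd_le a : Rabs (snd a) <= Cmod a.
Proof. pose proof (Rmax_Cmod a). pose proof (Rmax_r (Rabs (fst a)) (Rabs (snd a))). lra. Qed.

Lemma sq_le_le x y : 0 <= y -> x * x <= y * y -> x <= y.
Proof. intros. nra. Qed.

Lemma Cmod_le_sum a : Cmod a <= Rabs (fst a) + Rabs (snd a).
Proof.
  apply sq_le_le. pose proof (Rabs_pos (fst a)); pose proof (Rabs_pos (snd a)); lra.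
  rewrite Cmod_sq. unfold nn. pose proof (Rabs_pos (fst a)); pose proof (Rabs_pos (snd a)).
  assert (fst a * fst a = Rabs (fst a) * Rabs (fst a)) by (rewrite <- Rabs_mult; rewrite Rabs_right; nra).
  assert (snd a * snd a = Rabs (snd a) * Rabs (snd a)) by (rewrite <- Rabs_mult; rewrite Rabs_right; nra).
  nra.
Qed.

Lemma dot_CS a b : Rabs (dot a b) <= Cmod a * Cmod b.
Proof.
  pose proof (Cmod_ge_0 a); pose proof (Cmod_ge_0 b).
  apply sq_le_le. nra.
  rewrite <- Rabs_mult, Rabs_right by nra.
  replace (Cmod a * Cmod b * (Cmod a * Cmod b)) with ((Cmod a * Cmod a) * (Cmod b * Cmod b)) by ring.
  rewrite !Cmod_sq. unfold dot, nn. pose proof (Rle_0_sqr (fst a * snd b - snd a * fst b)). unfold Rsqr in *. nra.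
Qed.

Lemma Cmod_minus_sym a b : Cmod (a - b) = Cmod (b - a).
Proof. rewrite !Cmod_nn; f_equal; unfold nn; destruct a, b; simpl; ring. Qed.

Definition Rcv (a : nat -> R) (l : R) : Prop :=
  forall e, 0 < e -> exists N, forall n, (N <= n)%nat -> Rabs (a n - l) < e.

Lemma Rcv_le a l k : Rcv a l -> (forall n, a n <= k) -> l <= k.
Proof.
  intros H Hk. destruct (Rle_dec l k) as [|Hn]; auto.
  destruct (H (l - k)) as [N HN]; [lra|].
  specialize (HN N (le_n _)). specialize (Hk N). apply Rabs_def2 in HN. lra.
Qed.

Lemma Rcv_ge a l k : Rcv a l -> (forall n, k <= a n) -> k <= l.
Proof.
  intros H Hk. destruct (Rle_dec k l) as [|Hn]; auto.
  destruct (H (k - l)) as [N HN]; [lra|].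
  specialize (HN N (le_n _)). specialize (Hk N). apply Rabs_def2 in HN. lra.
Qed.

Lemma seq_conv_dot u l w : seq_conv u l -> Rcv (fun n => dot (u n) w) (dot l w).
Proof.
  intros H e He. destruct (H (e / (Cmod w + 1))) as [N HN].
  { apply Rdiv_lt_0_compat; pose proof (Cmod_ge_0 w); lra. }
  exists N. intros n Hn. specialize (HN n Hn).
  replace (dot (u n) w - dot l w) with (dot (u n - l)%C w) by (unfold dot; destruct (u n), l; simpl; ring).
  eapply Rle_lt_trans. apply dot_CS.
  pose proof (Cmod_ge_0 w). pose proof (Cmod_ge_0 (u n - l)%C).
  apply Rle_lt_trans with (Cmod (u n - l)%C * (Cmod w + 1)). nra.
  apply Rlt_le_trans with (e / (Cmod w + 1) * (Cmod w + 1)).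
  apply Rmult_lt_compat_r; lra. right; field; lra.
Qed.

Lemma seq_conv_Cmod u l w : seq_conv u l -> Rcv (fun n => Cmod (u n - w)) (Cmod (l - w)).
Proof.
  intros H e He. destruct (H e He) as [N HN]. exists N. intros n Hn. specialize (HN n Hn).
  assert (E1: (u n - w = (u n - l) + (l - w))%C) by (apply C_ext; destruct (u n), l, w; simpl; ring).
  assert (E2: (l - w = - (u n - l) + (u n - w))%C) by (apply C_ext; destruct (u n), l, w; simpl; ring).
  pose proof (Cmod_triangle (u n - l) (l - w)). pose proof (Cmod_triangle (-(u n - l)) (u n - w)).
  rewrite Cmod_opp in H1. rewrite <- E1 in H0. rewrite <- E2 in H1.
  apply Rabs_def1; lra.
Qed.

Lemma seq_conv_of u l : Rcv (fun n => fst (u n)) (fst l) -> Rcv (fun n => snd (u n)) (snd l) -> seq_conv u l.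
Proof.
  intros H1 H2 e He. destruct (H1 (e/2)) as [N1 HN1]; [lra|]. destruct (H2 (e/2)) as [N2 HN2]; [lra|].
  exists (max N1 N2). intros n Hn.
  specialize (HN1 n ltac:(lia)). specialize (HN2 n ltac:(lia)).
  eapply Rle_lt_trans. apply Cmod_le_sum.
  replace (fst (u n - l)%C) with (fst (u n) - fst l) by (destruct (u n), l; simpl; ring).
  replace (snd (u n - l)%C) with (snd (u n) - snd l) by (destruct (u n), l; simpl; ring). lra.
Qed.

Lemma seq_conv_fst u l : seq_conv u l -> Rcv (fun n => fst (u n)) (fst l).
Proof.
  intros H e He. destruct (H e He) as [N HN]. exists N. intros n Hn. specialize (HN n Hn).
  eapply Rle_lt_trans; [|exact HN]. pose proof (abs_fst_le (u n - l)%C).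
  replace (fst (u n - l)%C) with (fst (u n) - fst l) in H0 by (destruct (u n), l; simpl; ring). lra.
Qed.
Lemma seq_conv_snd u l : seq_conv u l -> Rcv (fun n => snd (u n)) (snd l).
Proof.
  intros H e He. destruct (H e He) as [N HN]. exists N. intros n Hn. specialize (HN n Hn).
  eapply Rle_lt_trans; [|exact HN]. pose proof (abs_snd_le (u n - l)%C).
  replace (snd (u n - l)%C) with (snd (u n) - snd l) in H0 by (destruct (u n), l; simpl; ring). lra.
Qed.

Definition incr (phi : nat -> nat) := forall k, (phi k < phi (S k))%nat.

Lemma incr_ge phi : incr phi -> forall k, (k <= phi k)%nat.
Proof. intros H k; induction k. lia. specialize (H k). lia. Qed.

Lemma incr_mono phi : incr phi -> forall k j, (k <= j)%nat -> (phi k <= phi j)%nat.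
Proof. intros H k j Hkj. induction Hkj. lia. specialize (H m). lia. Qed.

Lemma incr_comp phi psi : incr phi -> incr psi -> incr (fun k => phi (psi k)).
Proof.
  intros H1 H2 k. pose proof (H2 k).
  assert (forall a b, (a < b)%nat -> (phi a < phi b)%nat).
  { intros a b Hab. pose proof (incr_mono phi H1 (S a) b Hab). specialize (H1 a). lia. }
  apply H0; auto.
Qed.

Lemma Rcv_sub a l psi : Rcv a l -> incr psi -> Rcv (fun k => a (psi k)) l.
Proof.
  intros H Hp e He. destruct (H e He) as [N HN]. exists N. intros n Hn. apply HN.
  pose proof (incr_ge psi Hp n). lia.
Qed.

Lemma seq_conv_sub u l psi : seq_conv u l -> incr psi -> seq_conv (fun k => u (psi k)) l.
Proof.
  intros H Hp e He. destruct (H e He) as [N HN]. exists N. intros n Hn. apply HN.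
  pose proof (incr_ge psi Hp n). lia.
Qed.

Lemma subseq_of_adh (a : nat -> R) l :
  (forall e N, 0 < e -> exists p, (N <= p)%nat /\ Rabs (a p - l) < e) ->
  exists phi, incr phi /\ Rcv (fun k => a (phi k)) l.
Proof.
  intros H.
  assert (Hpos : forall k, 0 < / (INR k + 1)).
  { intro k; apply Rinv_0_lt_compat; pose proof (pos_INR k); lra. }
  set (ch := fun N k => proj1_sig (constructive_indefinite_description _ (H (/ (INR k + 1)) N (Hpos k)))).
  assert (Hch : forall N k, (N <= ch N k)%nat /\ Rabs (a (ch N k) - l) < / (INR k + 1)).
  { intros N k. unfold ch. destruct (constructive_indefinite_description _ _). simpl. auto. }
  set (phi := fix phi k := match k with O => ch O O | S k => ch (S (phi k)) (S k) end).
  exists phi. split.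
  - intro k. simpl. destruct (Hch (S (phi k)) (S k)). lia.
  - intros e He. destruct (archimed (/ e)) as [H1 _].
    assert (0 <= IZR (up (/ e))). { pose proof (Rinv_0_lt_compat e He). lra. }
    exists (Z.to_nat (up (/ e))). intros n Hn.
    assert (Hb : Rabs (a (phi n) - l) < / (INR n + 1)).
    { destruct n; simpl; apply Hch. }
    eapply Rlt_le_trans. exact Hb.
    assert (INR (Z.to_nat (up (/ e))) <= INR n) by (apply le_INR; auto).
    rewrite INR_IZR_INZ, Z2Nat.id in H2. 2: { apply le_IZR. lra. }
    rewrite <- (Rinv_inv e). apply Rinv_le_contravar. apply Rinv_0_lt_compat; lra. lra.
Qed.

Lemma BW1 (a : nat -> R) M : (forall n, Rabs (a n) <= M) ->
  exists phi l, incr phi /\ Rcv (fun k => a (phi k)) l.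
Proof.
  intros HM.
  destruct (Bolzano_Weierstrass a (fun c => -M <= c <= M) (compact_P3 (-M) M)) as [l Hl].
  { intro n; specialize (HM n); pose proof (Rle_abs (a n)); pose proof (Rle_abs (- a n)); rewrite Rabs_Ropp in *; lra. }
  destruct (subseq_of_adh a l) as [phi [H1 H2]].
  { intros e N He. destruct (Hl (disc l (mkposreal e He)) N) as [p [Hp1 Hp2]].
    { exists (mkposreal e He). intros y Hy; exact Hy. }
    exists p; split; auto. }
  exists phi, l; auto.
Qed.

Lemma BW2 (u : nat -> C) M : (forall n, Cmod (u n) <= M) ->
  exists phi l, incr phi /\ seq_conv (fun k => u (phi k)) l.
Proof.
  intros HM.
  destruct (BW1 (fun n => fst (u n)) M) as [phi [l1 [H1 H2]]].
  { intro n; eapply Rle_trans; [apply abs_fst_le|apply HM]. }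
  destruct (BW1 (fun k => snd (u (phi k))) M) as [psi [l2 [H3 H4]]].
  { intro n; eapply Rle_trans; [apply abs_snd_le|apply HM]. }
  exists (fun k => phi (psi k)), (l1, l2). split. apply incr_comp; auto.
  apply seq_conv_of; simpl.
  - apply (Rcv_sub (fun k => fst (u (phi k))) l1 psi); auto.
  - exact H4.
Qed.

Lemma Cmod_lt_of_nn x r : 0 <= r -> nn x < r * r -> Cmod x < r.
Proof. intros. pose proof (Cmod_sq x). pose proof (Cmod_ge_0 x). nra. Qed.
Lemma Cmod_le_of_nn x r : 0 <= r -> nn x <= r * r -> Cmod x <= r.
Proof. intros. pose proof (Cmod_sq x). pose proof (Cmod_ge_0 x). nra. Qed.

Lemma Cdiv_R v m : m <> 0 -> (v / RtoC m)%C = (fst v / m, snd v / m).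
Proof. intros. destruct v; unfold Cdiv; apply C_ext; simpl; field; auto. Qed.

Lemma Cmod_scale k v : 0 <= k -> Cmod (RtoC k * v)%C = k * Cmod v.
Proof. intros. rewrite Cmod_mult, Cmod_R, Rabs_pos_eq; auto. Qed.

Lemma normal_scale B z v k : is_normal B z v -> 0 < k -> is_normal B z (RtoC k * v)%C.
Proof.
  intros [Hv H] Hk. split.
  - intro E. apply Hv. apply (f_equal (fun x => (RtoC (/ k) * x)%C)) in E.
    rewrite Cmult_assoc, <- RtoC_mult, Rinv_l, Cmult_1_l, Cmult_0_r in E; auto. lra.
  - assert (Hm : 0 < Cmod v) by (apply Cmod_gt_0; auto).
    assert (E : ((RtoC k * v) / RtoC (Cmod (RtoC k * v)))%C = (v / RtoC (Cmod v))%C).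
    { rewrite Cmod_scale by lra. rewrite !Cdiv_R by nra. apply C_ext; simpl; field; lra. }
    rewrite E. exact H.
Qed.

Lemma normal_ne0 B z v : is_normal B z v -> 0 < Cmod v.
Proof. intros [Hv _]. apply Cmod_gt_0; auto. Qed.

Lemma normal_unit B z v : is_normal B z v -> is_normal B z (RtoC (/ Cmod v) * v)%C /\ Cmod (RtoC (/ Cmod v) * v)%C = 1.
Proof.
  intros H. pose proof (normal_ne0 _ _ _ H). split.
  apply normal_scale; auto. apply Rinv_0_lt_compat; auto.
  rewrite Cmod_scale. field; lra. left; apply Rinv_0_lt_compat; auto.
Qed.

Definition convex_at (B : C -> Prop) z := forall v w (l : R), is_normal B z v -> is_normal B z w -> 0 <= l <= 1 ->
        is_normal B z (RtoC l * v + RtoC (1 - l) * w)%C.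

Lemma no_opposite B z v k : convex_at B z -> is_normal B z v -> is_normal B z (RtoC (- k) * v)%C -> 0 < k -> False.
Proof.
  intros Hc H1 H2 Hk.
  pose proof (Hc _ _ (k / (1 + k)) H1 H2) as H3.
  assert (0 <= k / (1 + k) <= 1). { split. apply Rlt_le, Rdiv_lt_0_compat; lra.
    apply Rmult_le_reg_r with (1 + k). lra. field_simplify; lra. }
  specialize (H3 H). destruct H3 as [H3 _]. apply H3. apply C_ext; simpl; field; lra.
Qed.

Lemma cos_ge_theta theta phi : 0 < theta < PI / 2 -> - theta < phi < theta -> cos theta <= cos phi.
Proof.
  intros. pose proof PI_RGT_0.
  destruct (Rle_dec 0 phi).
  - destruct (Req_dec phi theta). subst; lra.
    left. apply cos_decreasing_1; lra.
  - rewrite <- (cos_neg phi). left. apply cos_decreasing_1; lra.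
Qed.

Lemma prox_normal (B : C -> Prop) q w : w <> q ->
  (forall y, Cmod (y - w)%C < Cmod (w - q)%C -> ~ B y) -> is_normal B q (w - q)%C.
Proof.
  intros Hne Hball.
  assert (Hv : (w - q)%C <> 0%C). { intro E. apply Hne. pose proof (f_equal fst E) as E1; pose proof (f_equal snd E) as E2.
    destruct w, q; simpl in *. apply C_ext; simpl; lra. }
  split; auto.
  set (rho := Cmod (w - q)%C).
  assert (Hr : 0 < rho) by (apply Cmod_gt_0; auto).
  intros theta Hth.
  assert (Hc : 0 < cos theta) by (apply cos_gt_0; lra).
  exists (2 * rho * cos theta). split. nra.
  intros phi t Hphi Ht. apply Hball. fold rho.
  pose proof (cos_ge_theta theta phi Hth Hphi) as Hcp.
  rewrite Cdiv_R by lra.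
  assert (Hrr : rho * rho = nn (w - q)%C) by (apply Cmod_sq).
  destruct w as [w1 w2], q as [q1 q2]. unfold nn in Hrr; simpl in Hrr.
  unfold expi. apply Cmod_lt_of_nn. lra. unfold nn; simpl.
  set (a := w1 + - q1) in *. set (b := w2 + - q2) in *.
  pose proof (sin2_cos2 phi). unfold Rsqr in H.
  set (cs := cos phi) in *. set (sn := sin phi) in *.
  match goal with |- ?X < _ => replace X with
   (t * t * (sn * sn + cs * cs) * ((a * a + b * b) / (rho * rho)) - 2 * t * cs * ((a * a + b * b) / rho) + (a * a + b * b))
   by (unfold a, b; field; lra) end.
  rewrite <- Hrr. rewrite H.
  replace (rho * rho / (rho * rho)) with 1 by (field; lra).
  replace (rho * rho / rho) with rho by (field; lra).
  assert (Ht2 : t < 2 * rho * cs) by nra. assert (t * t < t * (2 * rho * cs)) by (apply Rmult_lt_compat_l; lra). lra.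
Qed.

Lemma key_alg m s m' s' x y :
  m*m + s*s = 1 -> m'*m' + s'*s' = 1 -> x*x + y*y = 1 -> 0 <= s -> 0 <= s' -> 0 <= y -> m <= x ->
  (s = 0 -> m = 1) -> (s' = 0 -> m' = 1) ->
  (0 < s'*m + s*m' \/ (m = 1 /\ m' = 1 /\ s = 0 /\ s' = 0)) ->
  0 < x * (m + m') + y * (s - s').
Proof.
  intros Hm Hm' Hx Hs Hs' Hy Hxm D1 D2 D3.
  destruct (Req_dec s 0) as [E|Hs0].
  - specialize (D1 E). subst. assert (x = 1) by nra. assert (y = 0) by nra. subst.
    destruct D3 as [D3|[_ [D3 _]]].
    + assert (0 < s') by nra. assert (m' > -1) by nra. nra.
    + subst; lra.
  - assert (Hsp : 0 < s) by lra.
    destruct D3 as [D3|[_ [_ [D3 _]]]]; [|lra].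
    assert (Hmm : 0 < m + m').
    { destruct (Rle_dec 0 m).
      - destruct (Rle_dec (m + m') 0); [|lra].
        assert (m' <= - m) by lra. assert (m' * m' >= m * m) by nra. assert (s' <= s) by nra. nra.
      - destruct (Rle_dec (m + m') 0); [|lra].
        assert (s*m' > 0) by nra. assert (m' > 0) by nra.
        assert (s <= s') by nra. nra. }
    assert (H1 : 0 <= 1 + m * m') by nra.
    assert (H2 : 0 < 1 + m * m' - s * s').
    { assert ((1 + m*m') * (1 + m*m') - (s*s') * (s*s') = (m + m') * (m + m')) by nra.
      assert (0 <= s * s') by nra. nra. }
    assert (H3 : 0 <= x * s - y * m).
    { destruct (Rle_dec m 0); destruct (Rle_dec 0 x).
      - nra.
      - assert (x * x <= m * m) by nra. assert (s * s <= y * y) by nra. assert (s <= y) by nra.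
        assert (y * (- m) >= s * (- m)) by nra. assert (s * (-x) <= s * (- m)) by nra. nra.
      - assert (m * m <= x * x) by nra. assert (y * y <= s * s) by nra. assert (y <= s) by nra.
        assert (x * s >= m * s) by nra. assert (y * m <= s * m) by nra. nra.
      - lra. }
    assert (E : s * (x * (m + m') + y * (s - s')) = (x * s - y * m) * (m + m') + y * (1 + m * m' - s * s')) by nra.
    apply Rmult_lt_reg_l with s; auto. rewrite Rmult_0_r, E.
    destruct (Req_dec y 0) as [Ey|Ey].
    + subst. assert (x = 1 \/ x = -1) as [Ex|Ex] by nra.
      * subst. nra.
      * subst. assert (m = -1) by nra. subst. nra.
    + assert (0 < y) by lra. nra.
Qed.

Definition crs (a b : C) := fst a * snd b - snd a * fst b.
Definition perp (e : C) : C := (- snd e, fst e).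

Lemma Cmod1_nn e : Cmod e = 1 -> fst e * fst e + snd e * snd e = 1.
Proof. intro H. pose proof (Cmod_sq e). unfold nn in H0. rewrite H in H0. lra. Qed.

Lemma decomp e v : Cmod e = 1 -> v = (RtoC (dot v e) * e + RtoC (crs e v) * perp e)%C.
Proof.
  intro H. apply Cmod1_nn in H. destruct e as [e1 e2], v as [v1 v2]; simpl in *.
  unfold dot, crs; simpl. apply C_ext; simpl.
  - transitivity (v1 * (e1 * e1 + e2 * e2)). rewrite H; ring. ring.
  - transitivity (v2 * (e1 * e1 + e2 * e2)). rewrite H; ring. ring.
Qed.

Lemma lagrange e n a : Cmod e = 1 -> dot n a = dot n e * dot a e + crs e n * crs e a.
Proof.
  intro H. apply Cmod1_nn in H. unfold dot, crs.
  transitivity ((fst n * fst a + snd n * snd a) * (fst e * fst e + snd e * snd e)). rewrite H; ring. ring.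
Qed.

Lemma unit_coords e n : Cmod e = 1 -> Cmod n = 1 -> dot n e * dot n e + crs e n * crs e n = 1.
Proof.
  intros H H'. apply Cmod1_nn in H. apply Cmod1_nn in H'. unfold dot, crs.
  transitivity ((fst n * fst n + snd n * snd n) * (fst e * fst e + snd e * snd e)). ring. rewrite H, H'; ring.
Qed.

Lemma Cminus0 x : (x - 0)%C = x.
Proof. apply C_ext; simpl; ring. Qed.

Lemma seq_conv_Cmod0 s l : seq_conv s l -> Rcv (fun n => Cmod (s n)) (Cmod l).
Proof.
  intro H. pose proof (seq_conv_Cmod s l 0 H). rewrite Cminus0 in H0.
  intros e He. destruct (H0 e He) as [N HN]. exists N. intros n Hn. rewrite <- (Cminus0 (s n)). auto.
Qed.

Lemma Rcv_le_inv (a : nat -> R) l c : Rcv a l -> (forall k, a k <= c + / (INR k + 1)) -> l <= c.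
Proof.
  intros H Hk. destruct (Rle_dec l c) as [|Hn]; auto. exfalso.
  destruct (H ((l - c) / 2)) as [N HN]; [lra|].
  assert (He : 0 < (l - c) / 2) by lra.
  destruct (archimed (/ ((l - c) / 2))) as [H1 _].
  assert (0 <= IZR (up (/ ((l - c) / 2)))). { pose proof (Rinv_0_lt_compat _ He). lra. }
  set (K := Z.to_nat (up (/ ((l - c) / 2)))).
  assert (HK : / ((l - c) / 2) < INR K + 1).
  { unfold K. rewrite INR_IZR_INZ, Z2Nat.id. lra. apply le_IZR. lra. }
  set (n := max N K).
  specialize (HN n ltac:(unfold n; lia)). specialize (Hk n).
  assert (INR K <= INR n) by (apply le_INR; unfold n; lia).
  assert (/ (INR n + 1) < (l - c) / 2).
  { rewrite <- (Rinv_inv ((l - c) / 2)). apply Rinv_lt_contravar.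
    apply Rmult_lt_0_compat. apply Rinv_0_lt_compat; lra. pose proof (pos_INR n); lra. lra. }
  apply Rabs_def2 in HN. lra.
Qed.

Lemma exists_min (P : C -> Prop) w : (exists n, P n) -> (forall n, P n -> Cmod n = 1) ->
  (forall s l, (forall k, P (s k)) -> seq_conv s l -> P l) ->
  exists a, P a /\ forall n, P n -> dot a w <= dot n w.
Proof.
  intros Hne Hu Hcl.
  set (E := fun x => exists n, P n /\ x = - dot n w).
  assert (Hb : bound E).
  { exists (Cmod w). intros x [n [Hn ->]]. pose proof (dot_CS n w). rewrite (Hu n Hn) in H.
    pose proof (Rle_abs (- dot n w)). rewrite Rabs_Ropp in H0. lra. }
  assert (HE : exists x, E x). { destruct Hne as [n Hn]. exists (- dot n w). exists n; auto. }
  destruct (completeness E Hb HE) as [M [HM1 HM2]].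
  assert (Hs : forall k : nat, {n | P n /\ dot n w < - M + / (INR k + 1)}).
  { intro k. apply constructive_indefinite_description.
    destruct (classic (exists n, P n /\ dot n w < - M + / (INR k + 1))) as [H|H]; auto. exfalso.
    assert (Hp : 0 < / (INR k + 1)) by (apply Rinv_0_lt_compat; pose proof (pos_INR k); lra).
    assert (is_upper_bound E (M - / (INR k + 1))).
    { intros x [n [Hn ->]]. destruct (Rle_dec (- dot n w) (M - / (INR k + 1))); auto.
      exfalso. apply H. exists n. split; auto. lra. }
    specialize (HM2 _ H0). lra. }
  set (s := fun k => proj1_sig (Hs k)).
  assert (Hs1 : forall k, P (s k) /\ dot (s k) w < - M + / (INR k + 1)).
  { intro k. unfold s. destruct (Hs k); simpl; auto. }
  destruct (BW2 s 1) as [phi [l [Hphi Hl]]].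
  { intro n. rewrite (Hu _ (proj1 (Hs1 n))). lra. }
  assert (Pl : P l). { apply (Hcl _ l (fun k => proj1 (Hs1 (phi k))) Hl). }
  exists l. split; auto.
  assert (Hlw : dot l w <= - M).
  { apply (Rcv_le_inv (fun k => dot (s (phi k)) w)). apply seq_conv_dot; auto.
    intro k. destruct (Hs1 (phi k)) as [_ H]. pose proof (incr_ge phi Hphi k).
    assert (/ (INR (phi k) + 1) <= / (INR k + 1)).
    { apply Rinv_le_contravar. pose proof (pos_INR k); lra. apply le_INR in H0. lra. }
    lra. }
  intros n Hn. assert (En : E (- dot n w)) by (exists n; auto).
  specialize (HM1 _ En). lra.
Qed.

Lemma dot_scale_r n k v : dot n (RtoC k * v)%C = k * dot n v.
Proof. unfold dot; simpl; ring. Qed.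
Lemma dot_scale_l n k v : dot (RtoC k * v)%C n = k * dot v n.
Proof. unfold dot; simpl; ring. Qed.
Lemma dot_plus_r n a b : dot n (a + b)%C = dot n a + dot n b.
Proof. unfold dot; simpl; ring. Qed.
Lemma crs_dot e n : crs e n = dot n (perp e).
Proof. unfold crs, dot, perp; simpl; ring. Qed.
Lemma dot_comm a b : dot a b = dot b a.
Proof. unfold dot; ring. Qed.

Lemma Cmod1_ne0 l : Cmod l = 1 -> l <> 0%C.
Proof. intros H E. rewrite E, Cmod_0 in H. lra. Qed.

Lemma line_contra B z0 e v : convex_at B z0 -> Cmod e = 1 -> is_normal B z0 e -> is_normal B z0 v ->
  crs e v = 0 -> dot v e <= 0 -> False.
Proof.
  intros Hc He Hne Hnv Hcr Hd.
  assert (Ev : v = (RtoC (dot v e) * e)%C).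
  { rewrite (decomp e v He) at 1. rewrite Hcr. apply C_ext; simpl; ring. }
  destruct (Rle_lt_or_eq_dec _ _ Hd) as [Hlt|Heq].
  - apply (no_opposite B z0 e (- dot v e) Hc Hne); [|lra].
    rewrite Ropp_involutive. rewrite <- Ev. auto.
  - destruct Hnv as [Hv _]. apply Hv. rewrite Ev, Heq. apply C_ext; simpl; ring.
Qed.

Lemma choose_u (B : C -> Prop) z0 :
  convex_at B z0 ->
  (forall s l, (forall k, is_normal B z0 (s k)) -> seq_conv s l -> l <> 0%C -> is_normal B z0 l) ->
  (exists n, is_normal B z0 n) ->
  exists u, Cmod u = 1 /\ forall n, is_normal B z0 n -> 0 < dot n u.
Proof.
  intros Hc Hcl [n0 Hn0].
  destruct (normal_unit _ _ _ Hn0) as [He He1].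
  set (e := (RtoC (/ Cmod n0) * n0)%C) in *. clearbody e.
  assert (Hclos : forall (sg : R) s l, (forall k, is_normal B z0 (s k) /\ Cmod (s k) = 1 /\ 0 <= sg * crs e (s k)) ->
     seq_conv s l -> is_normal B z0 l /\ Cmod l = 1 /\ 0 <= sg * crs e l).
  { intros sg s l Hs Hl.
    assert (Cmod l = 1).
    { pose proof (seq_conv_Cmod0 _ _ Hl). apply Rle_antisym.
      apply (Rcv_le _ _ _ H). intro n; rewrite (proj1 (proj2 (Hs n))); lra.
      apply (Rcv_ge _ _ _ H). intro n; rewrite (proj1 (proj2 (Hs n))); lra. }
    split; [|split]; auto.
    - apply (Hcl s l); auto. intro k; apply Hs. apply Cmod1_ne0; auto.
    - rewrite crs_dot. rewrite <- dot_scale_r.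
      apply (Rcv_ge (fun k => dot (s k) (RtoC sg * perp e)%C)). apply seq_conv_dot; auto.
      intro k. rewrite dot_scale_r, <- crs_dot. apply Hs. }
  destruct (exists_min (fun n => is_normal B z0 n /\ Cmod n = 1 /\ 0 <= 1 * crs e n) e) as [a [[Ha1 [Ha2 Ha3]] Ha]].
  { exists e. split; auto. split; auto. unfold crs; lra. }
  { intros n [_ [H _]]; auto. }
  { intros s l Hs Hl. apply (Hclos 1 s l); auto. }
  destruct (exists_min (fun n => is_normal B z0 n /\ Cmod n = 1 /\ 0 <= -1 * crs e n) e) as [b [[Hb1 [Hb2 Hb3]] Hb]].
  { exists e. split; auto. split; auto. unfold crs; lra. }
  { intros n [_ [H _]]; auto. }
  { intros s l Hs Hl. apply (Hclos (-1) s l); auto. }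
  set (m := dot a e). set (s := crs e a). set (m' := dot b e). set (s' := - crs e b).
  assert (Hma : m * m + s * s = 1) by (apply unit_coords; auto).
  assert (Hmb : m' * m' + s' * s' = 1) by (unfold m', s'; rewrite <- (unit_coords e b); auto; ring).
  assert (Hs0 : 0 <= s) by (unfold s; lra). assert (Hs0' : 0 <= s') by (unfold s'; lra).
  assert (D1 : s = 0 -> m = 1).
  { intro E. assert (m * m = 1) by nra. destruct (Rle_dec m 0).
    - exfalso. apply (line_contra B z0 e a Hc He1 He Ha1); auto.
    - nra. }
  assert (D2 : s' = 0 -> m' = 1).
  { intro E. assert (m' * m' = 1) by nra. destruct (Rle_dec m' 0).
    - exfalso. apply (line_contra B z0 e b Hc He1 He Hb1); auto. unfold s' in E; lra.
    - nra. }
  assert (D3 : 0 < s' * m + s * m' \/ (m = 1 /\ m' = 1 /\ s = 0 /\ s' = 0)).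
  { destruct (Req_dec (s + s') 0) as [E|E].
    - right. assert (s = 0) by lra. assert (s' = 0) by lra. auto.
    - left. set (l := s' / (s + s')).
      assert (Hl : 0 <= l <= 1). { unfold l. split. apply Rmult_le_pos; auto. left; apply Rinv_0_lt_compat; lra.
        apply Rmult_le_reg_r with (s + s'). lra. field_simplify; lra. }
      pose proof (Hc a b l Ha1 Hb1 Hl) as Hcomb.
      pose proof (normal_scale _ _ _ (s + s') Hcomb ltac:(lra)) as Hcv.
      set (cv := (RtoC (s + s') * (RtoC l * a + RtoC (1 - l) * b))%C) in Hcv.
      assert (Ecr : crs e cv = 0).
      { unfold cv, l. unfold s, s' in *. unfold crs in *; simpl. field. lra. }
      assert (Edt : dot cv e = s' * m + s * m').
      { unfold cv, l. unfold s, s', m, m' in *. unfold crs, dot in *; simpl. field. lra. }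
      destruct (Rle_dec (s' * m + s * m') 0); [|lra].
      exfalso. apply (line_contra B z0 e cv Hc He1 He Hcv); auto. lra. }
  assert (Hpos : forall n, is_normal B z0 n -> Cmod n = 1 -> 0 < dot n (a + b)%C).
  { intros n Hn Hn1. rewrite dot_plus_r, (lagrange e n a He1), (lagrange e n b He1).
    fold m s m'. set (x := dot n e). set (y := crs e n).
    assert (Hxy : x * x + y * y = 1) by (apply unit_coords; auto).
    destruct (Rle_dec 0 y).
    - assert (m <= x). { apply (Ha n). split; auto. split; auto. unfold y in *; lra. }
      replace (x * m + y * s + (x * m' + y * crs e b)) with (x * (m + m') + y * (s - s')) by (unfold s'; ring).
      apply key_alg; auto.
    - assert (m' <= x). { apply (Hb n). split; auto. split; auto. unfold y in *; lra. }
      replace (x * m + y * s + (x * m' + y * crs e b)) with (x * (m' + m) + (- y) * (s' - s)) by (unfold s'; ring).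
      apply key_alg; auto. lra. nra.
      destruct D3 as [D3|[? [? [? ?]]]]. left; lra. right; auto. }
  assert (Hu0 : 0 < Cmod (a + b)%C).
  { apply Cmod_gt_0. intro E. specialize (Hpos e He He1). rewrite E in Hpos. unfold dot in Hpos; simpl in Hpos. lra. }
  exists (RtoC (/ Cmod (a + b)%C) * (a + b))%C. split.
  - rewrite Cmod_scale. field; lra. left; apply Rinv_0_lt_compat; auto.
  - intros n Hn. destruct (normal_unit _ _ _ Hn) as [Hn' Hn1].
    specialize (Hpos _ Hn' Hn1). rewrite dot_scale_l in Hpos. rewrite dot_scale_r.
    pose proof (normal_ne0 _ _ _ Hn).
    apply Rmult_lt_0_compat. apply Rinv_0_lt_compat; auto.
    assert (0 < / Cmod n) by (apply Rinv_0_lt_compat; auto). nra.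
Qed.

Lemma inv_pos k : 0 < / (INR k + 1).
Proof. apply Rinv_0_lt_compat; pose proof (pos_INR k); lra. Qed.

Lemma inv_le_sub phi k : incr phi -> / (INR (phi k) + 1) <= / (INR k + 1).
Proof.
  intro H. pose proof (incr_ge phi H k). apply le_INR in H0.
  apply Rinv_le_contravar. pose proof (pos_INR k); lra. lra.
Qed.

Lemma inv_small e : 0 < e -> exists N, forall n, (N <= n)%nat -> / (INR n + 1) < e.
Proof.
  intros He. destruct (archimed (/ e)) as [H1 _].
  assert (0 <= IZR (up (/ e))). { pose proof (Rinv_0_lt_compat e He). lra. }
  exists (Z.to_nat (up (/ e))). intros n Hn.
  assert (INR (Z.to_nat (up (/ e))) <= INR n) by (apply le_INR; auto).
  rewrite INR_IZR_INZ, Z2Nat.id in H0. 2: { apply le_IZR. lra. }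
  rewrite <- (Rinv_inv e). apply Rinv_lt_contravar.
  apply Rmult_lt_0_compat. apply Rinv_0_lt_compat; lra. pose proof (pos_INR n); lra. lra.
Qed.

Lemma seq_conv_rate w z : (forall k, Cmod (w k - z)%C < / (INR k + 1)) -> seq_conv w z.
Proof.
  intros H e He. destruct (inv_small e He) as [N HN]. exists N. intros n Hn.
  eapply Rlt_trans. apply H. apply HN; auto.
Qed.

Definition lim_closed (B : C -> Prop) := forall (zs vs : nat -> C) z v, (forall n, boundary B (zs n)) ->
  (forall n, is_normal B (zs n) (vs n)) -> seq_conv zs z -> seq_conv vs v -> v <> 0%C -> is_normal B z v.

Lemma uniform_c (B : C -> Prop) z0 u : lim_closed B ->
  (forall n, is_normal B z0 n -> 0 < dot n u) ->
  exists c r, 0 < c /\ 0 < r /\ forall q n, boundary B q -> Cmod (q - z0)%C < r -> is_normal B q n -> c * Cmod n <= dot n u.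
Proof.
  intros Hlim Hu. apply NNPP. intro Hno.
  assert (Hk : forall k, {p : C * C | boundary B (fst p) /\ Cmod (fst p - z0)%C < / (INR k + 1) /\
     is_normal B (fst p) (snd p) /\ dot (snd p) u < / (INR k + 1) * Cmod (snd p)}).
  { intro k. apply constructive_indefinite_description. apply NNPP; intro H. apply Hno.
    exists (/ (INR k + 1)), (/ (INR k + 1)). split; [apply inv_pos|]. split; [apply inv_pos|].
    intros q n H1 H2 H3. apply Rnot_lt_le. intro H4. apply H. exists (q, n); simpl; auto. }
  set (zs := fun k => fst (proj1_sig (Hk k))).
  set (ns := fun k => snd (proj1_sig (Hk k))).
  assert (Hp : forall k, boundary B (zs k) /\ Cmod (zs k - z0)%C < / (INR k + 1) /\
     is_normal B (zs k) (ns k) /\ dot (ns k) u < / (INR k + 1) * Cmod (ns k)).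
  { intro k. unfold zs, ns. destruct (Hk k); simpl; auto. }
  set (vs := fun k => (RtoC (/ Cmod (ns k)) * ns k)%C).
  assert (Hv : forall k, is_normal B (zs k) (vs k) /\ Cmod (vs k) = 1 /\ dot (vs k) u < / (INR k + 1)).
  { intro k. destruct (Hp k) as [_ [_ [H1 H2]]]. destruct (normal_unit _ _ _ H1). split; auto. split; auto.
    unfold vs. rewrite dot_scale_l. pose proof (normal_ne0 _ _ _ H1).
    apply Rmult_lt_reg_l with (Cmod (ns k)); auto. rewrite <- Rmult_assoc, Rinv_r by lra. lra. }
  destruct (BW2 vs 1) as [phi [l [Hphi Hl]]].
  { intro n; rewrite (proj1 (proj2 (Hv n))); lra. }
  assert (Hl1 : Cmod l = 1).
  { pose proof (seq_conv_Cmod0 _ _ Hl). apply Rle_antisym.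
    apply (Rcv_le _ _ _ H). intro n; rewrite (proj1 (proj2 (Hv _))); lra.
    apply (Rcv_ge _ _ _ H). intro n; rewrite (proj1 (proj2 (Hv _))); lra. }
  assert (Hnl : is_normal B z0 l).
  { apply (Hlim (fun k => zs (phi k)) (fun k => vs (phi k))); auto.
    - intro n; apply Hp.
    - intro n; apply Hv.
    - apply seq_conv_rate. intro k. eapply Rlt_le_trans. apply Hp. apply inv_le_sub; auto.
    - apply Cmod1_ne0; auto. }
  specialize (Hu _ Hnl).
  assert (dot l u <= 0).
  { apply (Rcv_le_inv (fun k => dot (vs (phi k)) u)). apply seq_conv_dot; auto.
    intro k. destruct (Hv (phi k)) as [_ [_ H]]. pose proof (inv_le_sub phi k Hphi). lra. }
  lra.
Qed.

Lemma nearest (B : C -> Prop) p : is_closed B -> (exists b, B b) ->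
  exists q, B q /\ forall b, B b -> Cmod (p - q)%C <= Cmod (p - b)%C.
Proof.
  intros Hcl Hne.
  set (E := fun x => exists b, B b /\ x = - Cmod (p - b)%C).
  assert (Hb : bound E).
  { exists 0. intros x [b [Hb ->]]. pose proof (Cmod_ge_0 (p - b)%C). lra. }
  assert (HE : exists x, E x). { destruct Hne as [b Hb']. exists (- Cmod (p - b)%C). exists b; auto. }
  destruct (completeness E Hb HE) as [M [HM1 HM2]].
  assert (Hs : forall k : nat, {b | B b /\ Cmod (p - b)%C < - M + / (INR k + 1)}).
  { intro k. apply constructive_indefinite_description.
    destruct (classic (exists b, B b /\ Cmod (p - b)%C < - M + / (INR k + 1))) as [H|H]; auto. exfalso.
    pose proof (inv_pos k).
    assert (is_upper_bound E (M - / (INR k + 1))).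
    { intros x [b [Hb' ->]]. destruct (Rle_dec (- Cmod (p - b)%C) (M - / (INR k + 1))); auto.
      exfalso. apply H. exists b. split; auto. lra. }
    specialize (HM2 _ H1). lra. }
  set (s := fun k => proj1_sig (Hs k)).
  assert (Hs1 : forall k, B (s k) /\ Cmod (p - s k)%C < - M + / (INR k + 1)).
  { intro k. unfold s. destruct (Hs k); simpl; auto. }
  assert (HM0 : - M <= Cmod (p - s 0%nat)%C).
  { assert (E (- Cmod (p - s 0%nat)%C)) by (exists (s 0%nat); split; auto; apply Hs1). specialize (HM1 _ H). lra. }
  destruct (BW2 s (Cmod p + - M + 1)) as [phi [l [Hphi Hl]]].
  { intro n. destruct (Hs1 n) as [_ H]. pose proof (inv_pos n).
    assert (/ (INR n + 1) <= 1). { rewrite <- Rinv_1. apply Rinv_le_contravar. lra. pose proof (pos_INR n); lra. }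
    replace (s n) with (p - (p - s n))%C by (apply C_ext; simpl; ring).
    eapply Rle_trans. unfold Cminus at 1. apply Cmod_triangle. rewrite Cmod_opp. lra. }
  exists l. split.
  - apply Hcl. intros e He. destruct (Hl e He) as [N HN]. exists (s (phi N)). split. apply Hs1. apply HN; lia.
  - intros b Hb'.
    assert (Cmod (p - l)%C <= - M).
    { apply (Rcv_le_inv (fun k => Cmod (s (phi k) - p)%C)).
      rewrite Cmod_minus_sym. apply seq_conv_Cmod; auto.
      intro k. rewrite Cmod_minus_sym. destruct (Hs1 (phi k)) as [_ H]. pose proof (inv_le_sub phi k Hphi). lra. }
    assert (E (- Cmod (p - b)%C)) by (exists b; auto). specialize (HM1 _ H0). lra.
Qed.

Lemma real_ind (P : R -> Prop) a b : a <= b ->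
  (forall x, a <= x <= b -> (forall y, a <= y < x -> P y) -> exists e, 0 < e /\ forall y, a <= y < x + e -> y <= b -> P y) ->
  forall x, a <= x <= b -> P x.
Proof.
  intros Hab Hstep.
  set (E := fun x => a <= x <= b /\ forall y, a <= y <= x -> P y).
  assert (Ha : E a).
  { destruct (Hstep a ltac:(lra)) as [e [He H]]. intros; lra. split. lra. intros y Hy. apply H; lra. }
  assert (Hb : bound E). { exists b. intros x [Hx _]. lra. }
  destruct (completeness E Hb (ex_intro _ a Ha)) as [s [Hs1 Hs2]].
  assert (Has : a <= s) by (apply Hs1; auto).
  assert (Hsb : s <= b). { apply Hs2. intros x [Hx _]; lra. }
  assert (Hbelow : forall y, a <= y < s -> P y).
  { intros y Hy. destruct (classic (exists x, E x /\ y <= x)) as [[x [[_ Hx] Hyx]]|Hn].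
    - apply Hx; lra.
    - exfalso. assert (is_upper_bound E y).
      { intros x Hx. destruct (Rle_dec x y); auto. exfalso; apply Hn. exists x; split; auto; lra. }
      specialize (Hs2 _ H). lra. }
  destruct (Hstep s ltac:(lra) Hbelow) as [e [He H]].
  destruct (Rle_dec b s).
  - intros x Hx. apply H; lra.
  - exfalso. set (x := Rmin (s + e / 2) b).
    assert (E x). { unfold x; split. split. apply Rmin_case; lra. apply Rmin_r.
      intros y Hy. apply H. split. lra. assert (Rmin (s + e / 2) b <= s + e / 2) by apply Rmin_l. lra.
      assert (Rmin (s + e / 2) b <= b) by apply Rmin_r. lra. }
    specialize (Hs1 _ H0). assert (s < x) by (unfold x; apply Rmin_case; lra). lra.
Qed.

Lemma Cmod_tri3 a b c : Cmod (a - c)%C <= Cmod (a - b)%C + Cmod (b - c)%C.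
Proof.
  replace (a - c)%C with ((a - b) + (b - c))%C by (apply C_ext; simpl; ring). apply Cmod_triangle.
Qed.

Lemma lemmaA (B : C -> Prop) z0 u c r (q : C -> C) :
  Cmod u = 1 -> 0 < c ->
  (forall p, B (q p) /\ forall b, B b -> Cmod (p - q p)%C <= Cmod (p - b)%C) ->
  B z0 ->
  (forall y n, boundary B y -> Cmod (y - z0)%C < r -> is_normal B y n -> c * Cmod n <= dot n u) ->
  forall w d S, ~ B w -> Cmod (d - u)%C <= c / 2 -> 0 <= S ->
  (forall s, 0 <= s <= S -> Cmod (w + RtoC s * d - z0)%C < r / 2) ->
  ~ B (w + RtoC S * d)%C.
Proof.
  intros Hu Hc Hq Hz0 Hn w d S Hw Hd HS Hreg.
  set (p := fun s => (w + RtoC s * d)%C).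
  set (g := fun s => Cmod (p s - q (p s))%C).
  assert (g1 : forall s b, B b -> g s <= Cmod (p s - b)%C) by (intros; apply Hq; auto).
  assert (gpos : forall s, 0 <= g s) by (intros; apply Cmod_ge_0).
  assert (Epd : forall s t, Cmod (p s - p t)%C = Rabs (s - t) * Cmod d).
  { intros s t. rewrite <- Cmod_R, <- Cmod_mult. f_equal. unfold p. apply C_ext; simpl; ring. }
  assert (g2 : forall s t, g s <= g t + Rabs (s - t) * Cmod d).
  { intros s t. eapply Rle_trans. apply (g1 s (q (p t))). apply Hq.
    rewrite <- Epd. rewrite Rplus_comm. eapply Rle_trans. apply (Cmod_tri3 _ (p t)). unfold g. lra. }
  assert (g0 : 0 < g 0).
  { destruct (gpos 0); auto. exfalso. apply Hw.
    assert (p 0 = q (p 0)). { symmetry in H. apply Cmod_eq_0 in H.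
      apply C_ext; pose proof (f_equal fst H); pose proof (f_equal snd H); simpl in *; lra. }
    replace w with (p 0) by (unfold p; apply C_ext; simpl; ring). rewrite H0. apply Hq. }
  (* nearest points give normals *)
  assert (g3 : forall t, 0 <= t <= S -> 0 < g t -> (c / 2) * g t <= dot (p t - q (p t))%C d).
  { intros t Ht Hg. set (y := q (p t)) in *. set (v := (p t - y)%C).
    assert (Hne : p t <> y). { intro E. unfold g in Hg. fold y in Hg.
      assert (Hz : (p t - y)%C = 0%C) by (rewrite E; apply C_ext; simpl; ring). rewrite Hz, Cmod_0 in Hg; lra. }
    assert (Hball : forall y', Cmod (y' - p t)%C < Cmod (p t - y)%C -> ~ B y').
    { intros y' Hy' By'. pose proof (g1 t y' By'). unfold g in H; fold y in H. rewrite Cmod_minus_sym in Hy'. lra. }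
    pose proof (prox_normal B y (p t) Hne Hball) as Hnv. fold v in Hnv.
    assert (Hby : boundary B y).
    { split. intros e He. exists y. split. apply Hq. replace (y - y)%C with (RtoC 0) by (apply C_ext; simpl; ring). rewrite Cmod_0; lra.
      intros [e [He Hint]].
      set (lam := Rmin (1/2) (e / (2 * g t))).
      assert (Hl1 : 0 < lam). { unfold lam; apply Rmin_case; try lra. apply Rdiv_lt_0_compat; lra. }
      assert (Hl2 : lam <= 1/2) by apply Rmin_l.
      assert (Hl3 : lam <= e / (2 * g t)) by apply Rmin_r.
      set (w' := (y + RtoC lam * v)%C).
      assert (Bw' : B w').
      { apply Hint. replace (w' - y)%C with (RtoC lam * v)%C by (unfold w'; apply C_ext; simpl; ring).
        rewrite Cmod_scale by lra.
        assert (HG : g t = Cmod v) by (unfold g, v; fold y; reflexivity).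
        rewrite HG in Hl3, Hg.
        assert (lam * Cmod v <= e / (2 * Cmod v) * Cmod v) by (apply Rmult_le_compat_r; [apply Cmod_ge_0| exact Hl3]).
        replace (e / (2 * Cmod v) * Cmod v) with (e/2) in H by (field; lra). lra. }
      pose proof (g1 t w' Bw').
      replace (p t - w')%C with (RtoC (1 - lam) * v)%C in H by (unfold w', v; apply C_ext; simpl; ring).
      rewrite Cmod_scale in H by lra. unfold g in H, Hg. fold y in H, Hg. fold v in H, Hg. nra. }
    assert (Hyz : Cmod (y - z0)%C < r).
    { pose proof (g1 t z0 Hz0). pose proof (Hreg t Ht). unfold p in H0. fold (p t) in H0.
      eapply Rle_lt_trans. apply (Cmod_tri3 _ (p t)). rewrite Cmod_minus_sym. unfold g in H; fold y in H. lra. }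
    pose proof (Hn y v Hby Hyz Hnv).
    replace d with (u + (d - u))%C by (apply C_ext; simpl; ring).
    rewrite dot_plus_r. pose proof (dot_CS v (d - u)%C). apply Rabs_def2b in H0 || idtac.
    pose proof (Rle_abs (- dot v (d - u)%C)). rewrite Rabs_Ropp in H1.
    unfold g; fold y; fold v. pose proof (Cmod_ge_0 v). nra. }
  assert (g4 : forall s t, 0 <= s <= t -> t <= S -> 0 < g t ->
     g s * g s <= g t * g t - (t - s) * c * g t + (t - s) * (t - s) * nn d).
  { intros s t Hst HtS Hg. pose proof (g3 t ltac:(lra) Hg) as H3.
    set (y := q (p t)) in *. pose proof (g1 s y (proj1 (Hq (p t)))) as H1. fold y in H1.
    assert (E : (p s - y)%C = ((p t - y) - RtoC (t - s) * d)%C) by (unfold p; apply C_ext; simpl; ring).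
    rewrite E in H1. set (v := (p t - y)%C) in *.
    assert (Cmod (v - RtoC (t - s) * d)%C * Cmod (v - RtoC (t - s) * d)%C
      = nn v - 2 * (t - s) * dot v d + (t - s) * (t - s) * nn d).
    { rewrite Cmod_sq. unfold nn, dot; simpl; ring. }
    assert (Hgt : g t * g t = nn v) by (unfold g; fold y; fold v; apply Cmod_sq).
    pose proof (gpos s). nra. }
  assert (Hind : forall x, 0 <= x <= S -> g 0 <= g x).
  { apply real_ind. auto. intros x Hx Hbel.
    assert (Px : g 0 <= g x).
    { destruct (Rle_dec (g 0) (g x)) as [|Hlt]; auto. exfalso.
      destruct (Req_dec x 0) as [Ex|Ex]. { apply Hlt. rewrite Ex. lra. }
      set (eps := g 0 - g x).
      set (y := Rmax 0 (x - eps / (2 * (Cmod d + 1)))).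
      pose proof (Cmod_ge_0 d).
      assert (Hy0 : 0 <= y) by apply Rmax_l.
      assert (Hy1 : x - eps / (2 * (Cmod d + 1)) <= y) by apply Rmax_r.
      assert (Hyx : y < x). { unfold y. apply Rmax_case. lra. assert (0 < eps / (2 * (Cmod d + 1))) by (apply Rdiv_lt_0_compat; unfold eps; lra). lra. }
      assert (Py : g 0 <= g y). { destruct (Req_dec y 0) as [E0|E0]. rewrite E0; lra. apply Hbel. lra. }
      pose proof (g2 y x). rewrite Rabs_minus_sym, Rabs_pos_eq in H0 by lra.
      assert ((x - y) * Cmod d <= eps / 2).
      { apply Rle_trans with (eps / (2 * (Cmod d + 1)) * (Cmod d + 1)). nra. right; field; lra. }
      unfold eps in *. lra. }
    set (e := g 0 * Rmin (c / (2 * (nn d + 1))) (1 / (2 * (Cmod d + 1)))).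
    pose proof (nn_ge0 d). pose proof (Cmod_ge_0 d).
    assert (Hm1 : Rmin (c / (2 * (nn d + 1))) (1 / (2 * (Cmod d + 1))) <= c / (2 * (nn d + 1))) by apply Rmin_l.
    assert (Hm2 : Rmin (c / (2 * (nn d + 1))) (1 / (2 * (Cmod d + 1))) <= 1 / (2 * (Cmod d + 1))) by apply Rmin_r.
    assert (Hm0 : 0 < Rmin (c / (2 * (nn d + 1))) (1 / (2 * (Cmod d + 1)))).
    { apply Rmin_case; apply Rdiv_lt_0_compat; lra. }
    exists e. split. unfold e; nra.
    intros y Hy HyS.
    destruct (Rlt_le_dec y x). apply Hbel; lra.
    destruct (Req_dec y x). subst; auto.
    set (h := y - x).
    assert (Hh : 0 < h < e) by (unfold h; lra).
    assert (Heb : e * Cmod d <= g 0 / 2).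
    { unfold e. apply Rle_trans with (g 0 * (1 / (2 * (Cmod d + 1))) * Cmod d). apply Rmult_le_compat_r; auto. nra.
      apply Rle_trans with (g 0 * (1 / (2 * (Cmod d + 1))) * (Cmod d + 1)). nra. right; field; lra. }
    assert (Hen : e * nn d <= c * (g 0 / 2)).
    { unfold e. apply Rle_trans with (g 0 * (c / (2 * (nn d + 1))) * nn d). apply Rmult_le_compat_r; auto. nra.
      apply Rle_trans with (g 0 * (c / (2 * (nn d + 1))) * (nn d + 1)). assert (0 <= g 0 * (c / (2 * (nn d + 1)))).
      apply Rmult_le_pos; [lra|]. apply Rlt_le, Rdiv_lt_0_compat; lra. nra. right; field; lra. }
    assert (Hgy : g 0 / 2 <= g y).
    { pose proof (g2 x y). rewrite Rabs_minus_sym, Rabs_pos_eq in H2 by lra. fold h in H2.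
      assert (h * Cmod d <= e * Cmod d) by (apply Rmult_le_compat_r; lra). lra. }
    pose proof (g4 x y ltac:(lra) HyS ltac:(lra)). fold h in H2.
    assert (h * nn d <= c * g y) by nra.
    assert (g x * g x <= g y * g y) by nra.
    pose proof (gpos x). pose proof (gpos y). nra.
    }
  intro HB. pose proof (Hind S ltac:(lra)). pose proof (g1 S _ HB).
  replace (p S - (w + RtoC S * d))%C with (RtoC 0) in H0 by (unfold p; apply C_ext; simpl; ring).
  rewrite Cmod_0 in H0. lra.
Qed.

Definition Psi z0 u (x y : R) : C := (z0 + RtoC x * perp u - RtoC y * u)%C.
Definition cx z0 u p := dot (p - z0)%C (perp u).
Definition cy z0 u p := - dot (p - z0)%C u.

Section Coords.
Variables (z0 u : C).
Hypothesis Hu : Cmod u = 1.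

Lemma nnu : fst u * fst u + snd u * snd u = 1.
Proof. apply Cmod1_nn; auto. Qed.

Lemma cx_Psi x y : cx z0 u (Psi z0 u x y) = x.
Proof. pose proof nnu. unfold cx, Psi, dot, perp; simpl.
  transitivity (x * (fst u * fst u + snd u * snd u)). ring. rewrite H; ring. Qed.
Lemma cy_Psi x y : cy z0 u (Psi z0 u x y) = y.
Proof. pose proof nnu. unfold cy, Psi, dot, perp; simpl.
  transitivity (y * (fst u * fst u + snd u * snd u)). ring. rewrite H; ring. Qed.
Lemma Psi_c p : Psi z0 u (cx z0 u p) (cy z0 u p) = p.
Proof. pose proof nnu. unfold cx, cy, Psi, dot, perp; apply C_ext; simpl.
  - transitivity (fst z0 + (fst p - fst z0) * (fst u * fst u + snd u * snd u)). ring. rewrite H; ring.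
  - transitivity (snd z0 + (snd p - snd z0) * (fst u * fst u + snd u * snd u)). ring. rewrite H; ring. Qed.
Lemma Psi_00 : Psi z0 u 0 0 = z0.
Proof. unfold Psi; apply C_ext; simpl; ring. Qed.

Lemma Cmod_perp : Cmod (perp u) = 1.
Proof. rewrite <- Hu. unfold Cmod, perp; simpl. f_equal. ring. Qed.

Lemma Psi_dist x y x' y' : Cmod (Psi z0 u x y - Psi z0 u x' y')%C <= Rabs (x - x') + Rabs (y - y').
Proof.
  replace (Psi z0 u x y - Psi z0 u x' y')%C with (RtoC (x - x') * perp u + - (RtoC (y - y') * u))%C
    by (unfold Psi; apply C_ext; simpl; ring).
  eapply Rle_trans. apply Cmod_triangle. rewrite Cmod_opp, !Cmod_mult, !Cmod_R, Cmod_perp, Hu. lra.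
Qed.

Lemma Psi_z0 x y : Cmod (Psi z0 u x y - z0)%C <= Rabs x + Rabs y.
Proof. rewrite <- Psi_00 at 2. pose proof (Psi_dist x y 0 0). rewrite !Rminus_0_r in H. auto. Qed.

Lemma cx_lip p p' : Rabs (cx z0 u p - cx z0 u p') <= Cmod (p - p')%C.
Proof.
  unfold cx. replace (dot (p - z0)%C (perp u) - dot (p' - z0)%C (perp u)) with (dot (p - p')%C (perp u))
    by (unfold dot; simpl; ring).
  eapply Rle_trans. apply dot_CS. rewrite Cmod_perp; lra.
Qed.
Lemma cy_lip p p' : Rabs (cy z0 u p - cy z0 u p') <= Cmod (p - p')%C.
Proof.
  unfold cy. replace (- dot (p - z0)%C u - - dot (p' - z0)%C u) with (- dot (p - p')%C u)
    by (unfold dot; simpl; ring). rewrite Rabs_Ropp.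
  eapply Rle_trans. apply dot_CS. rewrite Hu; lra.
Qed.

End Coords.

Lemma Cmod_convex x y lam : 0 <= lam <= 1 ->
  Cmod (RtoC (1 - lam) * x + RtoC lam * y)%C <= (1 - lam) * Cmod x + lam * Cmod y.
Proof.
  intros. eapply Rle_trans. apply Cmod_triangle. rewrite !Cmod_scale by lra. lra.
Qed.

Lemma abs_le_iff x a : Rabs x <= a <-> -a <= x <= a.
Proof. unfold Rabs; destruct (Rcase_abs x); split; intros; lra. Qed.
Lemma abs_lt_iff x a : Rabs x < a <-> -a < x < a.
Proof. unfold Rabs; destruct (Rcase_abs x); split; intros; lra. Qed.

Section Chart.
Variables (B : C -> Prop) (z0 u : C) (c r : R) (q : C -> C).
Hypotheses (HBc : is_closed B) (Hu : Cmod u = 1) (Hc : 0 < c) (Hc1 : c <= 1) (Hr : 0 < r)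
  (Hq : forall p, B (q p) /\ forall b, B b -> Cmod (p - q p)%C <= Cmod (p - b)%C)
  (Hz0 : B z0) (Hbz : boundary B z0)
  (Hn : forall y n, boundary B y -> Cmod (y - z0)%C < r -> is_normal B y n -> c * Cmod n <= dot n u).

Let LA := lemmaA B z0 u c r q Hu Hc Hq Hz0 Hn.
Let b := r / 8.
Let a := c * b / 4.
Let P x y := Psi z0 u x y.

Lemma b_pos : 0 < b. Proof. unfold b; lra. Qed.
Lemma a_pos : 0 < a. Proof. unfold a; pose proof b_pos; nra. Qed.
Lemma a_le : a <= b / 4. Proof. unfold a; pose proof b_pos; nra. Qed.

Lemma LA_box x1 y1 x2 y2 : Rabs x1 <= a -> Rabs y1 <= b -> Rabs x2 <= a -> Rabs y2 <= b -> y2 < y1 ->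
  Rabs (x2 - x1) <= (c / 2) * (y1 - y2) -> ~ B (P x1 y1) -> ~ B (P x2 y2).
Proof.
  intros H1 H2 H3 H4 H5 H6 H7.
  set (S := y1 - y2).
  set (d := (RtoC (/ S) * (P x2 y2 - P x1 y1))%C).
  assert (E : P x2 y2 = (P x1 y1 + RtoC S * d)%C).
  { unfold d, P, Psi, S. apply C_ext; simpl; field; lra. }
  rewrite E. apply LA; auto.
  - assert (ED : (d - u)%C = (RtoC ((x2 - x1) / S) * perp u)%C).
    { unfold d, P, Psi, S, perp. apply C_ext; simpl; field; lra. }
    rewrite ED, Cmod_mult, Cmod_R, (Cmod_perp u Hu), Rmult_1_r.
    assert (HS : 0 < S) by (unfold S; lra).
    unfold Rdiv. rewrite Rabs_mult, (Rabs_pos_eq (/ S)) by (left; apply Rinv_0_lt_compat; lra).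
    apply Rmult_le_reg_r with S; auto.
    rewrite Rmult_assoc, Rinv_l by lra. fold S in H6. lra.
  - unfold S; lra.
  - intros s Hs. set (lam := s / S).
    assert (Hl : 0 <= lam <= 1). { unfold lam, S. split. apply Rmult_le_pos; [lra|]. left; apply Rinv_0_lt_compat; lra.
      apply Rmult_le_reg_r with (y1 - y2). lra. unfold S in Hs. field_simplify; lra. }
    replace (P x1 y1 + RtoC s * d)%C with (P (x1 + lam * (x2 - x1)) (y1 + lam * (y2 - y1))).
    eapply Rle_lt_trans. apply Psi_z0; auto.
    apply abs_le_iff in H1; apply abs_le_iff in H2; apply abs_le_iff in H3; apply abs_le_iff in H4.
    assert (Rabs (x1 + lam * (x2 - x1)) <= a) by (apply abs_le_iff; nra).
    assert (Rabs (y1 + lam * (y2 - y1)) <= b) by (apply abs_le_iff; nra).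
    pose proof a_le. unfold b in *. lra.
    unfold P, Psi, d, lam, S. apply C_ext; simpl; field; lra.
Qed.


Lemma upcl x y1 y2 : Rabs x <= a -> -b <= y1 <= y2 -> y2 <= b -> B (P x y1) -> B (P x y2).
Proof.
  intros Hx Hy1 Hy2 HB. destruct (Req_dec y1 y2) as [E|E]. subst; auto.
  apply NNPP. intro H. apply (LA_box x y2 x y1) in H; auto.
  apply abs_le_iff; lra. apply abs_le_iff; lra. lra. rewrite Rminus_diag, Rabs_R0. nra.
Qed.

Lemma top x : Rabs x <= a -> B (P x (b / 2)).
Proof.
  intros Hx. pose proof b_pos. apply NNPP. intro Hnb. apply (LA_box x (b/2) 0 0) in Hnb; auto.
  - apply Hnb. unfold P. rewrite Psi_00. auto.
  - apply abs_le_iff; lra.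
  - rewrite Rabs_R0. pose proof a_pos; lra.
  - rewrite Rabs_R0; lra.
  - lra.
  - rewrite Rminus_0_l, Rabs_Ropp. unfold a in Hx. lra.
Qed.

Lemma bottom x : Rabs x <= a -> ~ B (P x (- b)).
Proof.
  intros Hx. pose proof b_pos. pose proof a_pos. pose proof a_le.
  destruct Hbz as [_ Hni].
  assert (Hw : exists w, Cmod (w - z0)%C < a /\ ~ B w).
  { apply NNPP. intro H'. apply Hni. exists a. split; auto. intros w Hw. apply NNPP. intro. apply H'. exists w; auto. }
  destruct Hw as [w [Hw1 Hw2]].
  set (d := (RtoC (/ b) * (P x (- b) - w))%C).
  replace (P x (- b)) with (w + RtoC b * d)%C by (unfold d; apply C_ext; simpl; field; lra).
  apply LA; auto.
  - assert (ED : (d - u)%C = (RtoC (/ b) * ((z0 - w) + RtoC x * perp u))%C).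
    { unfold d, P, Psi, perp. apply C_ext; simpl; field; lra. }
    rewrite ED, Cmod_scale by (left; apply Rinv_0_lt_compat; lra).
    pose proof (Cmod_triangle (z0 - w) (RtoC x * perp u)). rewrite Cmod_mult, Cmod_R, Cmod_perp, Rmult_1_r in H2 by auto.
    rewrite Cmod_minus_sym in Hw1.
    apply Rmult_le_reg_l with b; auto. rewrite <- Rmult_assoc, Rinv_r, Rmult_1_l by lra.
    unfold a in *. lra.
  - lra.
  - intros s Hs. set (lam := s / b).
    assert (Hl : 0 <= lam <= 1). { unfold lam. split. apply Rmult_le_pos; [lra|]. left; apply Rinv_0_lt_compat; lra.
      apply Rmult_le_reg_r with b. lra. field_simplify; lra. }
    replace (w + RtoC s * d - z0)%C with (RtoC (1 - lam) * (w - z0) + RtoC lam * (P x (- b) - z0))%C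
      by (unfold lam, d; apply C_ext; simpl; field; lra).
    eapply Rle_lt_trans. apply Cmod_convex; auto.
    pose proof (Psi_z0 z0 u Hu x (- b)). rewrite Rabs_Ropp, (Rabs_pos_eq b) in H2 by lra. fold (P x (-b)) in H2.
    assert ((1 - lam) * Cmod (w - z0)%C <= (1 - lam) * a) by (apply Rmult_le_compat_l; lra).
    assert (lam * Cmod (P x (- b) - z0)%C <= lam * (a + b)) by (apply Rmult_le_compat_l; lra).
    unfold b in *. nra.
Qed.

Definition fP (x m : R) := (forall y, -b <= y <= b -> B (P x y) -> m <= y) /\
  (forall m', (forall y, -b <= y <= b -> B (P x y) -> m' <= y) -> m' <= m).

Lemma f_ex x : exists m, Rabs x <= a -> fP x m.
Proof.
  destruct (classic (Rabs x <= a)) as [Hx|Hx]; [|exists 0; intro; contradiction].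
  pose proof b_pos.
  set (E := fun z => exists y, -b <= y <= b /\ B (P x y) /\ z = - y).
  assert (Hb : bound E). { exists b. intros z [y [Hy [_ ->]]]. lra. }
  assert (HE : exists z, E z). { exists (- (b / 2)). exists (b / 2). split. lra. split; auto. apply top; auto. }
  destruct (completeness E Hb HE) as [M [HM1 HM2]].
  exists (- M). intros _. split.
  - intros y Hy HB. assert (E (- y)) by (exists y; auto). specialize (HM1 _ H0). lra.
  - intros m' Hm'. assert (is_upper_bound E (- m')).
    { intros z [y [Hy [HB ->]]]. specialize (Hm' y Hy HB). lra. }
    specialize (HM2 _ H0). lra.
Qed.

Definition f x := proj1_sig (constructive_indefinite_description _ (f_ex x)).

Lemma f_spec x : Rabs x <= a -> fP x (f x).
Proof. unfold f. destruct (constructive_indefinite_description _ _). simpl. auto. Qed.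

Lemma f_bounds x : Rabs x <= a -> -b <= f x <= b / 2.
Proof.
  intros Hx. pose proof b_pos. destruct (f_spec x Hx) as [H1 H2]. split.
  - apply H2. intros y Hy _. lra.
  - apply H1. lra. apply top; auto.
Qed.

Lemma f_att x : Rabs x <= a -> B (P x (f x)).
Proof.
  intros Hx. pose proof b_pos. destruct (f_spec x Hx) as [H1 H2]. pose proof (f_bounds x Hx).
  apply HBc. intros e He.
  destruct (classic (exists y, -b <= y <= b /\ B (P x y) /\ y < f x + e)) as [[y [Hy [HB Hlt]]]|Hno].
  - exists (P x y). split; auto. eapply Rle_lt_trans. apply Psi_dist; auto.
    rewrite Rminus_diag, Rabs_R0, Rplus_0_l. assert (f x <= y) by (apply H1; auto).
    rewrite Rabs_pos_eq; lra.
  - exfalso. assert (f x + e <= f x). { apply H2. intros y Hy HB. apply Rnot_lt_le. intro. apply Hno. exists y; auto. }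
    lra.
Qed.

Lemma f_gt x : Rabs x <= a -> -b < f x.
Proof.
  intros Hx. destruct (f_bounds x Hx). destruct H. auto. exfalso. apply (bottom x Hx). rewrite H. apply f_att; auto.
Qed.

Lemma f_char x y : Rabs x <= a -> -b <= y <= b -> (B (P x y) <-> f x <= y).
Proof.
  intros Hx Hy. split.
  - intro HB. apply (f_spec x Hx); auto.
  - intro Hle. apply (upcl x (f x) y); auto. pose proof (f_bounds x Hx). lra. lra. apply f_att; auto.
Qed.

Lemma f_lip1 x x' : Rabs x <= a -> Rabs x' <= a -> f x <= f x' + (2 / c) * Rabs (x - x').
Proof.
  intros Hx Hx'. pose proof b_pos. pose proof (f_bounds x Hx). pose proof (f_bounds x' Hx').
  assert (HK : 0 <= (2 / c) * Rabs (x - x')). { apply Rmult_le_pos. apply Rlt_le, Rdiv_lt_0_compat; lra. apply Rabs_pos. }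
  set (y := f x' + (2 / c) * Rabs (x - x')).
  destruct (Rle_dec (b / 2) y). lra.
  destruct (Req_dec x x') as [E|E]. subst. unfold y. lra.
  assert (Hpos : 0 < Rabs (x - x')) by (apply Rabs_pos_lt; lra).
  assert (B (P x y)).
  { apply NNPP. intro H2. apply (LA_box x y x' (f x')) in H2; auto.
    - apply H2, f_att; auto.
    - apply abs_le_iff; unfold y in *; lra.
    - apply abs_le_iff; lra.
    - unfold y. assert (0 < 2 / c * Rabs (x - x')). apply Rmult_lt_0_compat; auto. apply Rdiv_lt_0_compat; lra. lra.
    - unfold y. rewrite Rabs_minus_sym. right. field. lra. }
  apply (f_char x y Hx); auto. unfold y in *; lra.
Qed.

Lemma f_lip x x' : Rabs x <= a -> Rabs x' <= a -> Rabs (f x - f x') <= (2 / c) * Rabs (x - x').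
Proof.
  intros Hx Hx'. pose proof (f_lip1 x x' Hx Hx'). pose proof (f_lip1 x' x Hx' Hx). rewrite Rabs_minus_sym in H0.
  apply abs_le_iff. lra.
Qed.

Lemma fst_m (x y : C) : fst (x - y)%C = fst x - fst y.
Proof. simpl; ring. Qed.
Lemma snd_m (x y : C) : snd (x - y)%C = snd x - snd y.
Proof. simpl; ring. Qed.

Lemma chart : exists (U W : C -> Prop) (F G : C -> C),
  is_open U /\ U z0 /\ is_open W /\
  homeomorphic_via (fun y => U y /\ B y) (fun p => W p /\ half_plane p) F G.
Proof.
  pose proof b_pos as Hb. pose proof a_pos as Ha. pose proof a_le as Hab.
  set (K := 2 / c). assert (HK : 0 < K) by (unfold K; apply Rdiv_lt_0_compat; lra).
  set (cxp := cx z0 u). set (cyp := cy z0 u).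
  exists (fun p => Rabs (cxp p) < a /\ Rabs (cyp p) < b).
  exists (fun q => Rabs (fst q) < a /\ -b < snd q + f (fst q) < b).
  exists (fun p => (cxp p, cyp p - f (cxp p))).
  exists (fun q => P (fst q) (snd q + f (fst q))).
  split; [|split; [|split]].
  - intros p [H1 H2]. exists (Rmin (a - Rabs (cxp p)) (b - Rabs (cyp p))). split.
    apply Rmin_case; lra.
    intros w Hw. pose proof (Rmin_l (a - Rabs (cxp p)) (b - Rabs (cyp p))) as R1. pose proof (Rmin_r (a - Rabs (cxp p)) (b - Rabs (cyp p))) as R2.
    pose proof (cx_lip z0 u Hu w p) as L1. pose proof (cy_lip z0 u Hu w p) as L2. fold cxp cyp in L1, L2.
    apply abs_lt_iff in H1; apply abs_lt_iff in H2. apply abs_le_iff in L1; apply abs_le_iff in L2.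
    pose proof (Rle_abs (cxp p)) as A1. pose proof (Rle_abs (- cxp p)) as A2. pose proof (Rle_abs (cyp p)) as A3. pose proof (Rle_abs (- cyp p)) as A4.
    rewrite Rabs_Ropp in A2, A4.
    split; apply abs_lt_iff; lra.
  - unfold cxp, cyp, cx, cy. replace (z0 - z0)%C with (RtoC 0) by (apply C_ext; simpl; ring).
    unfold dot; simpl. rewrite !Rmult_0_l, !Rplus_0_l, Ropp_0, Rabs_R0. lra.
  - intros qq [H1 H2]. set (x := fst qq) in *.
    set (m := Rmin (b - (snd qq + f x)) (snd qq + f x + b)).
    assert (Hm : 0 < m) by (unfold m; apply Rmin_case; lra).
    exists (Rmin (a - Rabs x) (m / (2 + K))). split. apply Rmin_case. lra. apply Rdiv_lt_0_compat; lra.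
    intros w Hw. pose proof (Rmin_l (a - Rabs x) (m / (2 + K))) as R1. pose proof (Rmin_r (a - Rabs x) (m / (2 + K))) as R2.
    pose proof (abs_fst_le (w - qq)%C) as A1. pose proof (abs_snd_le (w - qq)%C) as A2. rewrite fst_m in A1; rewrite snd_m in A2. fold x in A1.
    assert (Hx' : Rabs (fst w) < a).
    { apply abs_le_iff in A1. apply abs_lt_iff in H1. pose proof (Rle_abs x). pose proof (Rle_abs (- x)). rewrite Rabs_Ropp in *.
      apply abs_lt_iff; lra. }
    split; auto.
    pose proof (f_lip (fst w) x ltac:(lra) ltac:(lra)) as FL. fold K in FL.
    assert (K * Rabs (fst w - x) <= K * Cmod (w - qq)%C) by (apply Rmult_le_compat_l; lra).
    assert (Cmod (w - qq)%C * (2 + K) < m).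
    { apply Rlt_le_trans with (m / (2 + K) * (2 + K)). apply Rmult_lt_compat_r; lra. right; field; lra. }
    apply abs_le_iff in FL. apply abs_le_iff in A2.
    pose proof (Rmin_l (b - (snd qq + f x)) (snd qq + f x + b)) as M1. pose proof (Rmin_r (b - (snd qq + f x)) (snd qq + f x + b)) as M2.
    fold m in M1, M2. pose proof (Cmod_ge_0 (w - qq)%C). nra.
  - split; [|split; [|split; [|split; [|split]]]].
    + intros p [[H1 H2] H3]. simpl. split; [split|].
      * auto.
      * replace (cyp p - f (cxp p) + f (cxp p)) with (cyp p) by ring. apply abs_lt_iff; auto.
      * unfold half_plane; simpl. assert (f (cxp p) <= cyp p); [|lra].
        apply (f_char (cxp p) (cyp p)). lra. apply abs_lt_iff in H2; lra.
        unfold P, cxp, cyp. rewrite Psi_c; auto.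
    + intros qq [[H1 H2] H3]. unfold half_plane in H3. split; [split|].
      * unfold cxp. unfold P. rewrite cx_Psi; auto.
      * unfold cyp. unfold P. rewrite cy_Psi; auto. apply abs_lt_iff; lra.
      * apply f_char. lra. lra. lra.
    + intros p [[H1 H2] H3]. simpl. replace (cyp p - f (cxp p) + f (cxp p)) with (cyp p) by ring.
      unfold P, cxp, cyp. apply Psi_c; auto.
    + intros qq [[H1 H2] H3]. unfold cxp, cyp, P. rewrite cx_Psi, cy_Psi by auto. apply C_ext; simpl; ring.
    + intros p [[H1 H2] H3] e He. exists (e / (2 + K)). split. apply Rdiv_lt_0_compat; lra.
      intros w [[Hw1 Hw2] Hw3] Hd.
      eapply Rle_lt_trans. apply Cmod_le_sum. rewrite fst_m, snd_m. simpl.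
      pose proof (cx_lip z0 u Hu w p) as L1. pose proof (cy_lip z0 u Hu w p) as L2. fold cxp cyp in L1, L2.
      pose proof (f_lip (cxp w) (cxp p) ltac:(lra) ltac:(lra)) as FL. fold K in FL.
      assert (K * Rabs (cxp w - cxp p) <= K * Cmod (w - p)%C) by (apply Rmult_le_compat_l; lra).
      replace (cyp w - f (cxp w) - (cyp p - f (cxp p))) with ((cyp w - cyp p) + - (f (cxp w) - f (cxp p))) by ring.
      pose proof (Rabs_triang (cyp w - cyp p) (- (f (cxp w) - f (cxp p)))) as TR. rewrite Rabs_Ropp in TR.
      assert (Cmod (w - p)%C * (2 + K) < e).
      { apply Rlt_le_trans with (e / (2 + K) * (2 + K)). apply Rmult_lt_compat_r; lra. right; field; lra. }
      lra.
    + intros qq [[H1 H2] H3] e He. exists (e / (2 + K)). split. apply Rdiv_lt_0_compat; lra.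
      intros w [[Hw1 Hw2] Hw3] Hd.
      eapply Rle_lt_trans. apply Psi_dist; auto.
      pose proof (abs_fst_le (w - qq)%C) as A1. pose proof (abs_snd_le (w - qq)%C) as A2. rewrite fst_m in A1; rewrite snd_m in A2.
      pose proof (f_lip (fst w) (fst qq) ltac:(lra) ltac:(lra)) as FL. fold K in FL.
      assert (K * Rabs (fst w - fst qq) <= K * Cmod (w - qq)%C) by (apply Rmult_le_compat_l; lra).
      replace (snd w + f (fst w) - (snd qq + f (fst qq))) with ((snd w - snd qq) + (f (fst w) - f (fst qq))) by ring.
      pose proof (Rabs_triang (snd w - snd qq) (f (fst w) - f (fst qq))) as TR.
      assert (Cmod (w - qq)%C * (2 + K) < e).
      { apply Rlt_le_trans with (e / (2 + K) * (2 + K)). apply Rmult_lt_compat_r; lra. right; field; lra. }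
      lra.
Qed.

End Chart.

Lemma ball_open z rad : is_open (fun w => Cmod (w - z)%C < rad).
Proof.
  intros w0 H. exists (rad - Cmod (w0 - z)%C). split. lra.
  intros w Hw. pose proof (Cmod_tri3 w w0 z). lra.
Qed.

Lemma interior_chart (B : C -> Prop) x e : 0 < e -> (forall w, Cmod (w - x)%C < e -> B w) ->
  exists (U W : C -> Prop) (F G : C -> C),
  is_open U /\ U x /\ is_open W /\
  homeomorphic_via (fun y => U y /\ B y) (fun p => W p /\ half_plane p) F G.
Proof.
  intros He Hint.
  set (o := (0, e) : C).
  exists (fun w => Cmod (w - x)%C < e), (fun p => Cmod (p - o)%C < e),
    (fun w => (w - x + o)%C), (fun p => (p - o + x)%C).
  split; [apply ball_open|split; [|split; [apply ball_open|]]].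
  - replace (x - x)%C with (RtoC 0) by (apply C_ext; simpl; ring). rewrite Cmod_0; lra.
  - split; [|split; [|split; [|split; [|split]]]].
    + intros w [H1 H2]. replace (w - x + o - o)%C with (w - x)%C by (apply C_ext; simpl; ring).
      split; auto. unfold half_plane. pose proof (abs_snd_le (w - x)%C). unfold o; simpl in *.
      pose proof (Rle_abs (- (snd w + - snd x))). rewrite Rabs_Ropp in H0. lra.
    + intros p [H1 H2]. replace (p - o + x - x)%C with (p - o)%C by (apply C_ext; simpl; ring).
      split; auto. apply Hint. replace (p - o + x - x)%C with (p - o)%C by (apply C_ext; simpl; ring). auto.
    + intros w _. apply C_ext; simpl; ring.
    + intros p _. apply C_ext; simpl; ring.
    + intros w _ eps Heps. exists eps. split; auto. intros y _ Hy.
      replace (y - x + o - (w - x + o))%C with (y - w)%C by (apply C_ext; simpl; ring). auto.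
    + intros w _ eps Heps. exists eps. split; auto. intros y _ Hy.
      replace (y - o + x - (w - o + x))%C with (y - w)%C by (apply C_ext; simpl; ring). auto.
Qed.


Theorem theorem9p1 (B : C -> Prop) :
  is_closed B -> semi_smooth B -> manifold_with_boundary_2 B.
Proof.
  intros HBc [_ [Hi Hii]] x Bx.
  destruct (classic (Defs.interior B x)) as [[e [He Hint]]|Hni].
  - apply (interior_chart B x e He Hint).
  - assert (Hbx : boundary B x).
    { split; auto. intros e He. exists x. split; auto.
      replace (x - x)%C with (RtoC 0) by (apply C_ext; simpl; ring). rewrite Cmod_0; lra. }
    destruct (Hi x Hbx) as [Hex Hconv].
    assert (Hcl : forall s l, (forall k, is_normal B x (s k)) -> seq_conv s l -> l <> 0%C -> is_normal B x l).
    { intros s l Hs Hl Hl0. apply (Hii (fun _ => x) s x l); auto.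
      intros eps Heps. exists 0%nat. intros. replace (x - x)%C with (RtoC 0) by (apply C_ext; simpl; ring). rewrite Cmod_0; lra. }
    destruct (choose_u B x Hconv Hcl Hex) as [u [Hu Hun]].
    destruct (uniform_c B x u Hii Hun) as [c0 [r [Hc0 [Hr Hn]]]].
    set (c := Rmin c0 1).
    assert (Hc : 0 < c) by (unfold c; apply Rmin_case; lra).
    assert (Hc1 : c <= 1) by apply Rmin_r.
    assert (Hcc : c <= c0) by apply Rmin_l.
    assert (Hn' : forall y n, boundary B y -> Cmod (y - x)%C < r -> is_normal B y n -> c * Cmod n <= dot n u).
    { intros y n H1 H2 H3. specialize (Hn y n H1 H2 H3). pose proof (Cmod_ge_0 n).
      assert (c * Cmod n <= c0 * Cmod n) by (apply Rmult_le_compat_r; auto). lra. }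
    set (q := fun p => proj1_sig (constructive_indefinite_description _ (nearest B p HBc (ex_intro _ x Bx)))).
    assert (Hq : forall p, B (q p) /\ forall b, B b -> Cmod (p - q p)%C <= Cmod (p - b)%C).
    { intro p. unfold q. destruct (constructive_indefinite_description _ _). simpl. auto. }
    eapply (chart B x u c r q); eauto.
Qed.
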